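(* Let $\boldsymbol{f},\bar{\boldsymbol{f}}\in\mathbb{R}^E$ with $\boldsymbol{u}^-_e<\boldsymbol{f}_e<\boldsymbol{u}^+_e$ for all $e$. If $\|\mathbf{L}(\boldsymbol{f})(\boldsymbol{f}-\bar{\boldsymbol{f}})\|_\infty\le\varepsilon$ for some $\varepsilon\le1/100$, then $\boldsymbol{\ell}(\boldsymbol{f})\approx_{1+3\varepsilon}\boldsymbol{\ell}(\bar{\boldsymbol{f}})$.
   Context: $G=(V,E)$ is a directed graph with $m=|E|$ edges; lower/upper capacities $\boldsymbol{u}^-,\boldsymbol{u}^+\in\mathbb{Z}^E$ are integers bounded in absolute value by $U$. $\alpha=1/(1000\log(mU))$. Lengths $\boldsymbol{\ell}(\boldsymbol{f})_e=(\boldsymbol{u}^+_e-\boldsymbol{f}_e)^{-1-\alpha}+(\boldsymbol{f}_e-\boldsymbol{u}^-_e)^{-1-\alpha}$ and $\mathbf{L}(\boldsymbol{f})=\mathrm{diag}(\boldsymbol{\ell}(\boldsymbol{f}))$. For positive vectors, $\boldsymbol{x}\approx_\beta\boldsymbol{y}$ means $\beta^{-1}\boldsymbol{y}_i\le\boldsymbol{x}_i\le\beta\boldsymbol{y}_i$ for all $i$. *)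

(* Defs.v *)
From HB Require Import structures.
From mathcomp Require Import all_boot all_order all_algebra.
From mathcomp Require Import reals exp.
Set Implicit Arguments. Unset Strict Implicit. Unset Printing Implicit Defensive.
Import Order.TTheory GRing.Theory Num.Theory.
Local Open Scope ring_scope.

Definition alpha (R : realType) (m U : nat) : R :=
  (1000 * ln ((m * U)%:R : R))^-1.

Definition len (R : realType) (E : finType) (U : nat)
    (um up : E -> int) (f : E -> R) (e : E) : R :=
  powR ((up e)%:~R - f e) (-1 - alpha R #|E| U)
  + powR (f e - (um e)%:~R) (-1 - alpha R #|E| U).

Definition approx_by (R : realType) (E : finType) (beta : R) (x y : E -> R) :=
  forall i, beta^-1 * y i <= x i /\ x i <= beta * y i.

Definition infnorm_le (R : realType) (E : finType) (v : E -> R) (eps : R) :=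
  forall e, `|v e| <= eps.

(* Main.v *)
Require Import Defs.
From HB Require Import structures.
From mathcomp Require Import all_boot all_order all_algebra.
From mathcomp Require Import reals exp.
From mathcomp Require Import sequences lra ring.
Import Order.TTheory GRing.Theory Num.Theory.
Local Open Scope ring_scope.

Set Implicit Arguments.
Section Aux.
Variable R : realType.

Lemma pow_exp (x p : R) : 0 < x -> powR x p = expR (p * ln x).
Proof. by move=> hx; rewrite /powR gt_eqF. Qed.

Lemma ln_bounds (z : R) : 0 < z -> 1 - z^-1 <= ln z /\ ln z <= z - 1.
Proof.
move=> hz; split; last first.
  have := @le_ln1Dx R (z - 1); have -> : 1 + (z - 1) = z by ring.
  by apply; lra.
have hzi : 0 < z^-1 by rewrite invr_gt0.
have := @le_ln1Dx R (z^-1 - 1); have -> : 1 + (z^-1 - 1) = z^-1 by ring.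
rewrite lnV ?posrE //.
move=> h; have {}h := h ltac:(lra); lra.
Qed.


Lemma alg1 (a eps q w : R) : 0 <= eps -> eps <= 1/100 -> 1 <= a -> a <= 101/100 ->
  q <= 1 + 2*eps -> w * (1 + 3*eps) = 1 -> 0 < w -> a * (q - 1) <= 1 - w.
Proof.
move=> *.
have e1 : (1 - w) * (1 + 3 * eps) = 3 * eps by lra.
have h1 : (a * (q - 1)) * (1 + 3*eps) <= (a * (2 * eps)) * (1 + 3*eps).
  apply: ler_wpM2r; first lra. apply: ler_wpM2l; lra.
have h2 : (a * (2 * eps)) * (1 + 3*eps) <= 3 * eps.
  have : a * (1 + 3 * eps) <= 3/2 by nra.
  nra.
have hb : 0 < 1 + 3 * eps by lra.
rewrite -(ler_pM2r hb); lra.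
Qed.

Lemma alg2 (a eps q v w : R) : 0 <= eps -> eps <= 1/100 -> 1 <= a -> a <= 101/100 ->
  1 - 2*eps <= q -> 0 < q -> v * q = 1 -> w * (1 + 3*eps) = 1 -> 0 < w -> a * (v - 1) <= 1 - w.
Proof.
move=> ? ? ? ? ? H4 *.
have e1 : (1 - w) * (1 + 3 * eps) = 3 * eps by lra.
have e2 : (v - 1) * q = 1 - q by lra.
have hb : 0 < 1 + 3 * eps by lra.
have h2 : a * (1 - q) * (1 + 3*eps) <= 3 * eps * q.
  have hK : a * (1 + 3 * eps) <= 11/10 by nra.
  have hK0 : 0 <= a * (1 + 3 * eps) by nra.
  have -> : a * (1 - q) * (1 + 3 * eps) = (a * (1 + 3 * eps)) * (1 - q) by ring.
  case: (lerP q 1) => hq1.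
    have : (a * (1 + 3 * eps)) * (1 - q) <= 11/10 * (2 * eps).
      apply: ler_pM; lra.
    nra.
  have : (a * (1 + 3 * eps)) * (1 - q) <= 0.
    by apply: mulr_ge0_le0; lra.
  nra.
rewrite -(ler_pM2r hb) -(ler_pM2r H4).
have -> : a * (v - 1) * (1 + 3 * eps) * q = a * (1 - q) * (1 + 3*eps) by rewrite -e2; ring.
have -> : (1 - w) * (1 + 3 * eps) * q = 3 * eps * q by rewrite e1.
done.
Qed.

Lemma term (a eps x y : R) : 0 < x -> 0 <= eps -> eps <= 1/100 -> 1 <= a -> a <= 101/100 ->
  `|y - x| <= 2 * eps * x ->
  0 < y /\ powR y (-a) <= (1 + 3*eps) * powR x (-a) /\ powR x (-a) <= (1 + 3*eps) * powR y (-a).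
Proof.
move=> hx he0 he1 ha1 ha2; rewrite ler_norml => /andP[hl hr].
have hy : 0 < y by nra.
pose q := y / x.
have hq : 0 < q by rewrite /q divr_gt0.
have hyq : y = q * x by rewrite /q divfK // gt_eqF.
have hq1 : q <= 1 + 2 * eps by move: hr; rewrite hyq; nra.
have hq2 : 1 - 2 * eps <= q by move: hl; rewrite hyq; nra.
pose b := 1 + 3 * eps.
have hb : 0 < b by rewrite /b; lra.
have eb : expR (ln b) = b by rewrite lnK // posrE.
have hw : b^-1 * b = 1 by rewrite mulVf // gt_eqF.
have hw0 : 0 < b^-1 by rewrite invr_gt0.
have hv : q^-1 * q = 1 by rewrite mulVf // gt_eqF.
have [lb1 lb2] := @ln_bounds b hb.
have [lq1 lq2] := @ln_bounds q hq.
have ey : powR y (-a) = expR (-a * ln q) * powR x (-a).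
  by rewrite !pow_exp // hyq lnM ?posrE // -expRD; congr expR; ring.
have ex : powR x (-a) = expR (a * ln q) * powR y (-a).
  have e0 : a * ln q + - a * ln q = 0 by ring.
  by rewrite ey mulrA -expRD e0 expR0 mul1r.
have hP : 0 < powR x (-a) by rewrite pow_exp // expR_gt0.
have hPy : 0 < powR y (-a) by rewrite pow_exp // expR_gt0.
split => //; split.
  rewrite ey ler_pM2r // -/b -eb ler_expR.
  have := @alg2 a eps q q^-1 b^-1 he0 he1 ha1 ha2 hq2 hq hv hw hw0.
  nra.
rewrite {1}ex ler_pM2r // -/b -eb ler_expR.
have := @alg1 a eps q b^-1 he0 he1 ha1 ha2 hq1 hw hw0.
nra.
Qed.
End Aux.

Section Aux4.
Variable R : realType.
Lemma step (a eps x d l : R) : 0 < x -> powR x (-a) <= l -> `|l * d| <= eps ->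
  (a - 1) * ln x <= 1/2 -> `|d| <= 2 * eps * x.
Proof.
move=> hx hl hd ha.
have h2 : 0 < (2:R) by [].
have [l2 _] := @ln_bounds R 2 h2.
have e1 : expR ((a - 1) * ln x) <= 2.
  rewrite -[X in _ <= X](@lnK R 2) ?posrE // ler_expR.
  have : 1 - 2^-1 = 1/2 :> R by field.
  lra.
have hP : 0 < powR x (-a) by rewrite pow_exp // expR_gt0.
have hdP : `|d| * powR x (-a) <= eps.
  apply: le_trans hd; rewrite normrM (mulrC `|l|); apply: ler_wpM2l => //.
  apply: le_trans hl (ler_norm _).
have eP : powR x (-a) * (expR ((a - 1) * ln x) * x) = 1.
  rewrite pow_exp // -[X in _ * (_ * X)](@lnK R x) ?posrE // -!expRD.
  have -> : - a * ln x + ((a - 1) * ln x + ln x) = 0 by ring.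
  by rewrite expR0.
have : `|d| <= eps * (expR ((a - 1) * ln x) * x).
  have := ler_wpM2r (ltW (mulr_gt0 (expR_gt0 ((a - 1) * ln x)) hx)) hdP.
  by rewrite -mulrA eP mulr1.
move=> h; apply: le_trans h _.
have he : 0 <= eps by apply: le_trans hd.
have : expR ((a - 1) * ln x) * x <= 2 * x by apply: ler_wpM2r => //; apply: ltW.
nra.
Qed.
End Aux4.

Unset Implicit Arguments.

Theorem lemma4p9 (R : realType) (V E : finType) (head tail : E -> V)
    (U : nat) (hmU : (1 < #|E| * U)%N) (um up : E -> int)
    (hU : forall e, `|um e| <= U%:Z /\ `|up e| <= U%:Z)
    (f fbar : E -> R) (eps : R)
    (hf : forall e, (um e)%:~R < f e /\ f e < (up e)%:~R)
    (heps : eps <= 1 / 100)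
    (hnorm : infnorm_le (fun e => len U um up f e * (f e - fbar e)) eps) :
  approx_by (1 + 3 * eps) (len U um up f) (len U um up fbar).
Proof.
move=> i.
have he0 : 0 <= eps by apply: le_trans (hnorm i).
set N := (#|E| * U)%N in hmU.
have hm : (0 < #|E|)%N by move: hmU; rewrite /N; case: #|E|.
have hNU : (2 * U <= N * N)%N by apply: leq_mul => //; apply: leq_pmull.
have hNR : 1 < (N%:R : R) by rewrite ltr1n.
have hN0 : 0 < (N%:R : R) by apply: lt_trans hNR.
set L := ln (N%:R : R).
have [hL1 _] := @ln_bounds R _ hN0.
have hNi : (N%:R : R)^-1 <= 1/2.
  have h2 : (2:R) <= N%:R by rewrite (ler_nat R 2).
  have hv : (N%:R : R)^-1 * N%:R = 1 by rewrite mulVf // gt_eqF.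
  have : 0 < (N%:R : R)^-1 by rewrite invr_gt0.
  nra.
set al := alpha R #|E| U.
have hal : al * (1000 * L) = 1 by rewrite /al /alpha mulVf // gt_eqF //; lra.
have hal0 : 0 < al by rewrite /al /alpha invr_gt0; lra.
have hal1 : al <= 1/500.
  have : 0 <= al * (L - 1/2).
    apply: mulr_ge0; first exact: ltW.
    move: hL1 hNi; rewrite -/L. lra.
  nra.
set a := 1 + al.
have ea : -1 - al = - a by rewrite /a; ring.
have [hu1 hu2] := hU i.
have hupU : (up i)%:~R <= (U%:R : R).
  have : up i <= U%:Z by apply: le_trans (ler_norm _) hu2.
  by rewrite -(ler_int R).
have humU : - (U%:R : R) <= (um i)%:~R.
  have : - (U%:Z) <= um i by move: hu1; rewrite ler_norml => /andP[].
  by rewrite -(ler_int R) mulrNz.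
have h2U : 2 * (U%:R : R) <= N%:R * N%:R by move: hNU; rewrite -(ler_nat R) !natrM.
have [hf1 hf2] := hf i.
have hlnb : forall x : R, 0 < x -> x <= 2 * U%:R -> (a - 1) * ln x <= 1/2.
  move=> x hx hxU.
  have : ln x <= 2 * L.
    have -> : 2 * L = ln (N%:R * N%:R) by rewrite lnM ?posrE // /L; ring.
    rewrite ler_ln ?posrE ?mulr_gt0 //; lra.
  rewrite /a; have -> : 1 + al - 1 = al by ring.
  move=> h; have : al * ln x <= al * (2 * L) by rewrite ler_wpM2l // ltW.
  nra.
have hn := hnorm i; rewrite /= in hn.
set s := (up i)%:~R - f i.
set t := f i - (um i)%:~R.
have hs : 0 < s by rewrite /s; lra.
have ht : 0 < t by rewrite /t; lra.
have hl : len U um up f i = powR s (-a) + powR t (-a) by rewrite /len -/al ea.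
have hl' : len U um up fbar i = powR ((up i)%:~R - fbar i) (-a) + powR (fbar i - (um i)%:~R) (-a)
  by rewrite /len -/al ea.
rewrite hl in hn; rewrite hl hl'.
have hA := powR_ge0 s (-a).
have hB := powR_ge0 t (-a).
have hs2 : `|((up i)%:~R - fbar i) - s| <= 2 * eps * s.
  have -> : (up i)%:~R - fbar i - s = f i - fbar i by rewrite /s; ring.
  apply: (@step R a eps s (f i - fbar i) _ hs _ hn); first lra.
  apply: hlnb; rewrite /s; lra.
have ht2 : `|(fbar i - (um i)%:~R) - t| <= 2 * eps * t.
  have -> : fbar i - (um i)%:~R - t = - (f i - fbar i) by rewrite /t; ring.
  rewrite normrN.
  apply: (@step R a eps t (f i - fbar i) _ ht _ hn); first lra.
  apply: hlnb; rewrite /t; lra.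
have ha1 : 1 <= a by rewrite /a; lra.
have ha2 : a <= 101/100 by rewrite /a; lra.
have [_ [s1 s2]] := @term R a eps s _ hs he0 heps ha1 ha2 hs2.
have [_ [t1 t2]] := @term R a eps t _ ht he0 heps ha1 ha2 ht2.
have hb : 0 < 1 + 3 * eps by lra.
split.
  rewrite ler_pdivrMl //; lra.
lra.
Qed.
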